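(* Let $p$ be a prime, $n>1$, $\alpha_0,\dots,\alpha_{n-1}\in\mathbb{L}_p$, and let $$A=\begin{pmatrix}0&1&0&\cdots&0\\0&0&1&\ddots&0\\\vdots&&\ddots&\ddots&0\\0&0&\cdots&0&1\\\alpha_0&\alpha_1&\cdots&\alpha_{n-2}&\alpha_{n-1}\end{pmatrix}\in\mathbb{L}_p^{n\times n}$$ (so that $A^T$ is the companion matrix of $-\alpha_0-\alpha_1t-\dots-\alpha_{n-1}t^{n-1}+t^n$). Let $\mathcal{F}$ be the linear cellular automaton over $(\mathbb{Z}/p\mathbb{Z})^n$ with associated matrix $A$. Then the following are equivalent: $\mathcal{F}$ is positively expansive; $A$ is expansive; $A^T$ is expansive; the polynomial $\alpha_0+\alpha_1t+\dots+\alpha_{n-1}t^{n-1}+t^n$ is expansive.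
   Context: $\mathbb{L}_p=\mathbb{Z}/p\mathbb{Z}[X,X^{-1}]$. The linear cellular automaton over $(\mathbb{Z}/p\mathbb{Z})^n$ with associated matrix $\sum_{j=-r}^rA_jX^{-j}$ ($A_j\in(\mathbb{Z}/p\mathbb{Z})^{n\times n}$) is the map $\mathcal{F}$ with $\mathcal{F}(c)_i=\sum_{j=-r}^rA_jc_{i+j}$ on $((\mathbb{Z}/p\mathbb{Z})^n)^{\mathbb{Z}}$, with metric $d(c,c')=2^{-\min\{|j|:c_j\neq c'_j\}}$ ($d(c,c)=0$); it is positively expansive if there is $\varepsilon>0$ such that for all $c\neq c'$ some $\ell\in\mathbb{N}$ gives $d(\mathcal{F}^\ell(c),\mathcal{F}^\ell(c'))\geq\varepsilon$. For nonzero $\alpha\in\mathbb{L}_p$, $\deg^+(\alpha)$ (resp. $\deg^-(\alpha)$) is the largest (resp. smallest) exponent with nonzero coefficient; $\deg^+(0)=-\infty$, $\deg^-(0)=+\infty$. A monic polynomial $\beta_0+\beta_1t+\dots+\beta_{n-1}t^{n-1}+t^n\in\mathbb{L}_p[t]$ is expansive if $\beta_0\neq0$, $\deg^+(\beta_0)>0$, $\deg^+(\beta_0)>\deg^+(\beta_i)$ for all $1\le i\le n-1$, $\deg^-(\beta_0)<0$ and $\deg^-(\beta_0)<\deg^-(\beta_i)$ for all $1\le i\le n-1$. A matrix $M\in\mathbb{L}_p^{n\times n}$ is expansive if $\det(tI_n-M)$ is expansive. *)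

(* Defs.v *)
From HB Require Import structures.
From mathcomp Require Import all_boot all_order all_algebra fraction.
From mathcomp Require Import boolp Rstruct.
Set Implicit Arguments. Unset Strict Implicit. Unset Printing Implicit Defensive.
Import Order.TTheory GRing.Theory Num.Theory.
Local Open Scope ring_scope.

(* The ring L_p = (Z/pZ)[X, X^-1] is realised inside the field of rational
   functions K p = Frac((Z/pZ)[X]): an element is a Laurent polynomial iff it
   is of the form q / X^k with q a polynomial. *)
Notation K p := {fraction {poly 'F_p}}.

Definition lfrac (p : nat) (k : nat) (q : {poly 'F_p}) : K p :=
  FracField.tofrac q / FracField.tofrac ('X^k).

Definition is_laurent (p : nat) (x : K p) : Prop :=
  exists (k : nat) (q : {poly 'F_p}), x = lfrac k q.

(* a chosen representation x = q / X^k (default (0,0) if x is not Laurent) *)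
Definition lrep (p : nat) (x : K p) : nat * {poly 'F_p} :=
  match pselect (exists r : nat * {poly 'F_p}, x = lfrac r.1 r.2) with
  | left h => projT1 (cid h)
  | right _ => (0%N, 0)
  end.

Definition lcoef (p : nat) (x : K p) (m : int) : 'F_p :=
  let r := lrep x in
  if (0 <= m + (r.1)%:Z)%R then (r.2)`_(absz (m + (r.1)%:Z)) else 0.

Definition degp (p : nat) (x : K p) : int :=
  let r := lrep x in ((size r.2).-1)%:Z - (r.1)%:Z.
Definition degm (p : nat) (x : K p) : int :=
  let r := lrep x in (find (fun a => a != 0) (r.2 : seq 'F_p))%:Z - (r.1)%:Z.

(* expansive monic polynomial beta_0 + ... + beta_{n-1} t^{n-1} + t^n in L_p[t]
   (conventions deg^+ 0 = -oo, deg^- 0 = +oo written out since beta_0 <> 0) *)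
Definition expansive_poly (p : nat) (P : {poly K p}) : Prop :=
  [/\ P \is monic, (forall i, is_laurent P`_i),
      P`_0 != 0,
      (0 < degp P`_0)%R /\ (forall i, (1 <= i < (size P).-1)%N ->
                              P`_i = 0 \/ (degp P`_i < degp P`_0)%R)
    & (degm P`_0 < 0)%R /\ (forall i, (1 <= i < (size P).-1)%N ->
                              P`_i = 0 \/ (degm P`_0 < degm P`_i)%R)].

Definition expansive_mx (p n : nat) (M : 'M[K p]_n) : Prop :=
  expansive_poly (char_poly M).

Definition config (p n : nat) := int -> 'cV['F_p]_n.

Definition coefmx (p n : nat) (M : 'M[K p]_n) (m : int) : 'M['F_p]_n :=
  \matrix_(a, b) lcoef (M a b) m.

(* a radius r such that all coefficients of entries of M vanish outside [-r, r] *)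
Definition radius (p n : nat) (M : 'M[K p]_n) : nat :=
  \max_(a < n) \max_(b < n) maxn (lrep (M a b)).1 (size (lrep (M a b)).2).

(* The LCA with associated matrix M = sum_{j=-r}^{r} A_j X^{-j}:
   F(c)_i = sum_{j=-r}^{r} A_j c_{i+j}, with A_j the coefficient of X^{-j}. *)
Definition lca (p n : nat) (M : 'M[K p]_n) (c : config p n) : config p n :=
  fun i => let r := radius M in
    \sum_(k < (r + r).+1)
       coefmx M (- (k%:Z - r%:Z)) *m c (i + (k%:Z - r%:Z)).

Definition diffat (p n : nat) (c c' : config p n) : pred nat :=
  fun k => `[< exists j : int, absz j = k /\ c j <> c' j >].

Definition cdist (p n : nat) (c c' : config p n) : Rdefinitions.R :=
  match pselect (exists k, diffat c c' k) with
  | left h => (2%:R ^- ex_minn h)%R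
  | right _ => 0%R
  end.

Definition pos_expansive (p n : nat) (F : config p n -> config p n) : Prop :=
  exists eps : Rdefinitions.R, (0 < eps)%R /\
    forall c c' : config p n, c <> c' ->
      exists l : nat, (eps <= cdist (iter l F c) (iter l F c'))%R.

Definition matA (p n : nat) (alpha : 'I_n -> K p) : 'M[K p]_n :=
  \matrix_(i, j) if (i.+1 < n)%N then ((j : nat) == i.+1)%:R else alpha j.

(* Main.v *)
Require Import Defs.
From HB Require Import structures.
From mathcomp Require Import all_boot all_order all_algebra fraction.
From mathcomp Require Import boolp Rstruct.
From mathcomp Require Import zify ring.
Set Implicit Arguments. Unset Strict Implicit. Unset Printing Implicit Defensive.
Import Order.TTheory GRing.Theory Num.Theory.
Local Open Scope ring_scope.

Section Core.
Variable F : fieldType.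

Definition conv (R : nat) (a : int -> F) (u : int -> F) (i : int) : F :=
  \sum_(k < (R + R).+1) a (- (k%:Z - R%:Z)) * u (i + (k%:Z - R%:Z)).

Lemma sum_single (m : nat) (i0 : 'I_m) (G : 'I_m -> F) :
  (forall i, i != i0 -> G i = 0) -> \sum_(i < m) G i = G i0.
Proof.
move=> H; rewrite (bigD1 i0) //= big1 ?addr0 // => i /H; done.
Qed.

Lemma conv_ext R a u v i :
  (forall y, u y = v y) -> conv R a u i = conv R a v i.
Proof. by move=> H; apply: eq_bigr => k _; rewrite H. Qed.

Lemma conv_shift R a u s i :
  conv R a (fun y => u (y - s)) i = conv R a u (i - s).
Proof. by apply: eq_bigr => k _; congr (_ * u _); ring. Qed.

Lemma conv_refl R a u i :
  conv R (fun t => a (- t)) (fun y => u (- y)) i = conv R a u (- i).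
Proof.
rewrite /conv (reindex_inj rev_ord_inj) /=.
apply: eq_bigr => k _; rewrite subSS.
have -> : ((R + R - k)%N%:Z - R%:Z) = - (k%:Z - R%:Z).
  have := ltn_ord k; lia.
by rewrite opprK; congr (_ * u _); ring.
Qed.

Lemma conv_delta R u i :
  conv R (fun t => (t == 0)%:R) u i = u i.
Proof.
rewrite /conv (@sum_single _ (Ordinal (leq_addr R R : R < (R + R).+1)%N)) /=.
  by rewrite subrr oppr0 eqxx mul1r addr0.
move=> k hk; have -> : (- (k%:Z - R%:Z) == 0) = false.
  apply/negbTE; move: hk; rewrite -val_eqE /=; lia.
by rewrite mul0r.
Qed.

Lemma conv_oppl R a u i : conv R (fun t => - a t) u i = - conv R a u i.
Proof. by rewrite /conv -sumrN; apply: eq_bigr => k _; rewrite mulNr. Qed.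

Lemma conv_sub R a u v i :
  conv R a (fun y => u y - v y) i = conv R a u i - conv R a v i.
Proof. by rewrite /conv -sumrB; apply: eq_bigr => k _; rewrite mulrBr. Qed.

Lemma conv0 R a i : conv R a (fun _ => 0) i = 0.
Proof. by rewrite /conv big1 // => k _; rewrite mulr0. Qed.

Definition recur (n R : nat) (beta : nat -> int -> F) (u : nat -> int -> F) :=
  forall l y, \sum_(i < n.+1) conv R (beta i) (u (l + i)%N) y = 0.

Lemma right_zero n R (m : nat) (beta : nat -> int -> F) (e : int) u :
  (R <= m)%N -> - (R%:Z) <= e -> e <= R%:Z -> beta 0%N e != 0 ->
  (forall i t, (i <= n)%N -> beta i t != 0 -> ((i == 0%N) && (t == e)) || (e < t)) ->
  recur n R beta u ->
  (forall l y, - (m%:Z) <= y <= m%:Z -> u l y = 0) ->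
  forall l y, - (m%:Z) <= y -> u l y = 0.
Proof.
move=> hRm hRe heR hb0 hsupp hrec hwin.
suff H : forall N : nat, forall l y, - (m%:Z) <= y <= m%:Z + N%:Z -> u l y = 0.
  move=> l y hy; apply: (H (absz y)); lia.
elim=> [|N IH] l y hy; first by apply: hwin; lia.
have [hy2|hy2] := boolP (y <= m%:Z + N%:Z); first by apply: IH; lia.
have hy3 : y = m%:Z + N%:Z + 1 by lia.
have := hrec l (y + e).
have hk0 : (absz (R%:Z - e) < (R + R).+1)%N by lia.
pose k0 : 'I_(R + R).+1 := Ordinal hk0.
rewrite (@sum_single _ ord0).
  rewrite /conv (@sum_single _ k0) /=; last first.
    move=> k hk; have [->|hb] := eqVneq (beta 0%N (- (k%:Z - R%:Z))) 0; first by rewrite mul0r.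
    have := hsupp 0%N _ isT hb; rewrite eqxx /= => /orP [/eqP he|hlt].
      by move: hk; rewrite -val_eqE /=; lia.
    rewrite IH ?mulr0 //; have := ltn_ord k; lia.
  have -> : - ((absz (R%:Z - e))%:Z - R%:Z) = e by lia.
  have -> : y + e + ((absz (R%:Z - e))%:Z - R%:Z) = y by lia.
  by rewrite addn0 => /eqP; rewrite mulf_eq0 (negbTE hb0) /= => /eqP.
move=> i hi; rewrite /conv big1 // => k _.
have [->|hb] := eqVneq (beta i (- (k%:Z - R%:Z))) 0; first by rewrite mul0r.
have := hsupp i _ (ltn_ord i : (i < n.+1)%N) hb.
have hi0 : (i : nat) != 0%N by move: hi; rewrite -val_eqE.
rewrite (negbTE hi0) /= => hlt.
rewrite IH ?mulr0 //; have := ltn_ord k; lia.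
Qed.


Lemma left_zero n R (m : nat) (beta : nat -> int -> F) (d : int) u :
  (R <= m)%N -> - (R%:Z) <= d -> d <= R%:Z -> beta 0%N d != 0 ->
  (forall i t, (i <= n)%N -> beta i t != 0 -> ((i == 0%N) && (t == d)) || (t < d)) ->
  recur n R beta u ->
  (forall l y, - (m%:Z) <= y <= m%:Z -> u l y = 0) ->
  forall l y, y <= m%:Z -> u l y = 0.
Proof.
move=> hRm hRd hdR hb0 hsupp hrec hwin l y hy.
suff : u l (- - y) = 0 by rewrite opprK.
apply: (@right_zero n R m (fun i t => beta i (- t)) (- d) (fun l y => u l (- y)));
  try lia.
- by rewrite opprK.
- move=> i t hi hb; have := hsupp i _ hi hb; rewrite -eqr_oppLR; lia.
- by move=> l' y'; rewrite -[RHS](hrec l' (- y')); apply: eq_bigr => i _; rewrite conv_refl.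
- by move=> l' y' hy'; apply: hwin; lia.
Qed.

Lemma recur_sub n R beta u v :
  recur n R beta u -> recur n R beta v ->
  recur n R beta (fun l y => u l y - v l y).
Proof.
move=> hu hv l y; under eq_bigr => i _ do rewrite conv_sub.
by rewrite sumrB hu hv subrr.
Qed.

Section Construct.
Variables (n R istar : nat) (beta : nat -> int -> F) (mu : int).
Hypotheses (hi1 : (1 <= istar)%N) (hin : (istar <= n)%N)
  (hb : beta istar mu != 0) (hRmu : - (R%:Z) <= mu) (hmuR : mu <= R%:Z)
  (hge : forall i t, (i <= n)%N -> beta i t != 0 -> mu <= t)
  (hgt : forall i t, (istar < i <= n)%N -> beta i t != 0 -> mu < t).

Let b := beta istar mu.
Let k0 := absz (R%:Z - mu).

Definition rest (look : nat -> int -> F) (j K : nat) : F :=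
  \sum_(i < n.+1) \sum_(k < (R + R).+1)
    (if (i == istar :> nat) && (k == k0 :> nat) then 0 else
     beta i (- (k%:Z - R%:Z)) * look (j - istar + i)%N (K%:Z + mu + (k%:Z - R%:Z))).

Fixpoint colf (tab : nat -> nat -> F) (K : nat) (fuel j : nat) : F :=
  match fuel with
  | 0 => 0
  | f.+1 =>
    if (j < istar)%N then (if (j == 0%N) && (K == 0%N) then 1 else 0)
    else - b^-1 * rest (fun idx pos =>
           if pos < K%:Z then (if pos < 0 then 0 else tab (absz pos) idx)
           else if (pos == K%:Z) && (idx < j)%N then colf tab K f idx else 0) j K
  end.

Fixpoint tabf (K : nat) : nat -> nat -> F :=
  match K with
  | 0 => fun _ j => colf (fun _ _ => 0) 0 j.+1 j
  | K1.+1 => fun K' j => if (K' <= K1)%N then tabf K1 K' j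
                         else colf (tabf K1) K1.+1 j.+1 j
  end.

Definition useq (j : nat) (y : int) : F :=
  if y < 0 then 0 else tabf (absz y) (absz y) j.

Lemma rest_ext look1 look2 j K :
  (forall (i : 'I_n.+1) (k : 'I_(R + R).+1),
     ~~ ((i == istar :> nat) && (k == k0 :> nat)) ->
     beta i (- (k%:Z - R%:Z)) != 0 ->
     look1 (j - istar + i)%N (K%:Z + mu + (k%:Z - R%:Z)) =
     look2 (j - istar + i)%N (K%:Z + mu + (k%:Z - R%:Z))) ->
  rest look1 j K = rest look2 j K.
Proof.
move=> H; apply: eq_bigr => i _; apply: eq_bigr => k _.
case: ifP => // hc.
have [->|hbk] := eqVneq (beta i (- (k%:Z - R%:Z))) 0; first by rewrite !mul0r.
by rewrite H // hc.
Qed.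

Lemma colf_fuel tab K j f1 f2 : (j < f1)%N -> (j < f2)%N ->
  colf tab K f1 j = colf tab K f2 j.
Proof.
elim: f1 j f2 => [|f1 IH] j [|f2] //= h1 h2.
case: ifP => // _; congr (_ * _); apply: rest_ext => i k _ _.
case: ifP => // _; case: ifP => //; move/andP=> [_ hidx].
apply: IH; lia.
Qed.

Lemma tabf_stable K K' j : (K' <= K)%N -> tabf K K' j = tabf K' K' j.
Proof.
elim: K => [|K IH] hK; first by move: hK; rewrite leqn0 => /eqP->.
rewrite /=; case: ifP => hK'; first by rewrite IH.
have -> : K' = K.+1 by lia.
by rewrite /= ltnn.
Qed.

Definition prevtab (K : nat) : nat -> nat -> F :=
  match K with 0 => fun _ _ => 0 | K1.+1 => tabf K1 end.

Lemma tab_prev K j : tabf K K j = colf (prevtab K) K j.+1 j.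
Proof. by case: K => [|K] //=; rewrite ltnn. Qed.

Lemma useq_nat j (K : nat) : useq j K%:Z = tabf K K j.
Proof. by rewrite /useq ltNge (_ : 0 <= K%:Z) //. Qed.

Lemma useq_neg j y : y < 0 -> useq j y = 0.
Proof. by rewrite /useq => ->. Qed.

Lemma useq00 : useq 0 0 = 1.
Proof. by rewrite (useq_nat 0 0) /= hi1. Qed.

Lemma useq_eq j K : (istar <= j)%N -> useq j K%:Z = - b^-1 * rest useq j K.
Proof.
move=> hj; rewrite useq_nat tab_prev /= ltnNge hj /=; congr (_ * _).
apply: rest_ext => i k hc hbk.
set t := - (k%:Z - R%:Z).
have ht : t = - (k%:Z - R%:Z) by [].
have hmt := hge (ltn_ord i : (i < n.+1)%N) hbk.
case: ifP => hpos; last move/negbT: hpos => hpos.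
  case: ifP => hneg; first by rewrite useq_neg.
  move: hpos hneg; case: K {hj} => [|K1] hpos hneg; first lia.
  rewrite /= /useq hneg tabf_stable //; lia.
have hpK : K%:Z + mu + (k%:Z - R%:Z) = K%:Z.
  have [h|h] := boolP (mu < t); last lia.
  have := @hge _ _ (ltn_ord i : (i < n.+1)%N) hbk; lia.
have htmu : t = mu by lia.
have hik : (i : nat) != istar.
  apply/negP => /eqP hi; move: hc; rewrite hi eqxx /= /k0; lia.
have hilt : (i < istar)%N.
  rewrite ltnNge; apply/negP => hle.
  have h2 : (istar < i <= n)%N by move: hik (ltn_ord i); lia.
  have := hgt h2 hbk; lia.
rewrite hpK eqxx /=; case: ifP => hidx; last lia.
rewrite (@colf_fuel _ _ _ _ (j - istar + i).+1); first by rewrite -tab_prev useq_nat.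
all: lia.
Qed.

Lemma useq_recur : recur n R beta useq.
Proof.
move=> l y.
have [hy|hy] := boolP (y - mu < 0).
  rewrite big1 // => i _; rewrite /conv big1 // => k _.
  have [->|hbk] := eqVneq (beta i (- (k%:Z - R%:Z))) 0; first by rewrite mul0r.
  have := hge (ltn_ord i : (i < n.+1)%N) hbk => hmt.
  by rewrite useq_neg ?mulr0 //; lia.
pose K := absz (y - mu).
have hK : y = K%:Z + mu by rewrite /K; lia.
have hk0 : (k0 < (R + R).+1)%N by rewrite /k0; lia.
have hi0 : (istar < n.+1)%N by lia.
set T := fun (i : 'I_n.+1) (k : 'I_(R + R).+1) =>
  beta i (- (k%:Z - R%:Z)) * useq (l + i)%N (y + (k%:Z - R%:Z)).
have -> : \sum_(i < n.+1) conv R (beta i) (useq (l + i)%N) y =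
   \sum_(i < n.+1) \sum_(k < (R + R).+1)
      ((if (i == istar :> nat) && (k == k0 :> nat) then T i k else 0) +
       (if (i == istar :> nat) && (k == k0 :> nat) then 0 else T i k)).
  by apply: eq_bigr => i _; apply: eq_bigr => k _; case: ifP; rewrite ?addr0 ?add0r.
under eq_bigr => i _ do rewrite big_split /=.
rewrite big_split /=.
rewrite (@sum_single _ (Ordinal hi0)); last first.
  move=> i hi; rewrite big1 // => k _; case: ifP => //; move/andP=> [/eqP h _].
  by move: hi; rewrite -val_eqE /= h eqxx.
rewrite (@sum_single _ (Ordinal hk0)) /=; last first.
  move=> k hk; rewrite eqxx /=; case: ifP => // /eqP h.
  by move: hk; rewrite -val_eqE /= h eqxx.
rewrite !eqxx /= /T.
have -> : - ((k0%:Z) - R%:Z) = mu by rewrite /k0; lia.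
have -> : y + (k0%:Z - R%:Z) = K%:Z by rewrite /k0; lia.
rewrite /= (@useq_eq (l + istar) K) ?leq_addl //.
have -> : rest useq (l + istar) K = \sum_(i < n.+1) \sum_(k < (R + R).+1)
      (if (i == istar :> nat) && (k == k0 :> nat) then 0 else
        beta i (- (k%:Z - R%:Z)) * useq (l + i)%N (y + (k%:Z - R%:Z))).
  apply: eq_bigr => i _; apply: eq_bigr => k _; case: ifP => // _.
  by rewrite addnK hK.
rewrite -/b; field; exact: hb.
Qed.

End Construct.

Lemma construct_exists n R (beta : nat -> int -> F) :
  (forall i t, (i <= n)%N -> beta i t != 0 -> - (R%:Z) <= t <= R%:Z) ->
  (exists i t0, [/\ (1 <= i <= n)%N, beta i t0 != 0 & forall t, t < t0 -> beta 0%N t = 0]) ->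
  exists u : nat -> int -> F, [/\ u 0%N 0 = 1, (forall l y, y < 0 -> u l y = 0) & recur n R beta u].
Proof.
move=> hsupp [i1 [t0 [hi1 hbt0 hzero]]].
have hi1n : (i1 <= n)%N by lia.
pose P := fun s : nat => [exists i : 'I_n.+1, beta i (s%:Z - R%:Z) != 0].
have hexP : exists s, P s.
  have hi1' : (i1 < n.+1)%N by lia.
  exists (absz (t0 + R%:Z)); apply/existsP; exists (Ordinal hi1') => /=.
  have := hsupp _ _ hi1n hbt0 => ht0.
  by have -> : (absz (t0 + R%:Z))%:Z - R%:Z = t0 by lia.
have [smin hPs hmin] := ex_minnP hexP.
pose mu := smin%:Z - R%:Z.
have hge : forall i t, (i <= n)%N -> beta i t != 0 -> mu <= t.
  move=> i t hi hbt; have := hsupp _ _ hi hbt => ht.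
  have : P (absz (t + R%:Z)).
    have hi' : (i < n.+1)%N by lia.
    apply/existsP; exists (Ordinal hi') => /=.
    by have -> : (absz (t + R%:Z))%:Z - R%:Z = t by lia.
  move/hmin; rewrite /mu; lia.
have hmuR : - (R%:Z) <= mu <= R%:Z.
  move/existsP: hPs => [i hi]; have hin : (i <= n)%N by rewrite -ltnS ltn_ord.
  have := hsupp i _ hin hi; lia.
pose Q := fun i : nat => (i <= n)%N && (beta i mu != 0).
have hexQ : exists i, Q i.
  by move/existsP: hPs => [i hi]; exists i; rewrite /Q hi andbT -ltnS ltn_ord.
have hubQ : forall i, Q i -> (i <= n)%N by move=> i /andP[].
have [istar hQ hmax] := ex_maxnP hexQ hubQ.
move/andP: hQ => [hin hbmu].
have hi1s : (1 <= istar)%N.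
  rewrite lt0n; apply/negP => /eqP hs0; move: hbmu; rewrite hs0 => hb0.
  have hmt0 := hge _ _ hi1n hbt0.
  have [hlt|hle] := boolP (mu < t0).
    by move: hb0; rewrite hzero ?eqxx.
  have htm : t0 = mu by lia.
  have : Q i1 by rewrite /Q -htm hbt0 andbT; lia.
  by move/hmax; rewrite hs0; lia.
have hgt : forall i t, (istar < i <= n)%N -> beta i t != 0 -> mu < t.
  move=> i t hi hbt; case/andP: hi => hi1' hi2.
  have hmt := hge i t hi2 hbt.
  rewrite lt_neqAle hmt andbT; apply/negP => /eqP htm.
  have : Q i by rewrite /Q hi2 htm hbt.
  by move/hmax; lia.
case/andP: hmuR => hmu1 hmu2.
exists (useq n R istar beta mu); split.
- exact: useq00.
- by move=> l y hy; apply: useq_neg.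
- apply: useq_recur => //.
Qed.

End Core.


Section Glue.
Variable p : nat.
Local Notation tf := (@FracField.tofrac {poly 'F_p}).

Lemma tfX_neq0 k : tf ('X^k) != 0.
Proof. by rewrite tofrac_eq0 monic_neq0 // monicXn. Qed.
Lemma divE (F : fieldType) (a b c d : F) : b != 0 -> d != 0 -> a / b = c / d -> a * d = c * b.
Proof. by move=> hb hd /eqP; rewrite eqr_div // => /eqP. Qed.
Lemma lfrac_eq k q k' q' : (@lfrac p) k q = (@lfrac p) k' q' -> q * 'X^k' = q' * 'X^k.
Proof.
rewrite /lfrac => E.
have := divE (tfX_neq0 k) (tfX_neq0 k') E.
rewrite -!tofracM => /eqP; rewrite tofrac_eq => /eqP; done.
Qed.

Lemma lrep_spec (x : K p) : is_laurent x -> x = (@lfrac p) (lrep x).1 (lrep x).2.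
Proof.
move=> [k [q ->]]; rewrite /lrep; case: pselect => [h|h].
  by case: (cid h) => r /= E.
by exfalso; apply: h; exists (k, q).
Qed.

Lemma lfrac_laurent k q : is_laurent ((@lfrac p) k q).
Proof. by exists k, q. Qed.

Definition cf (k : nat) (q : {poly 'F_p}) (t : int) : 'F_p :=
  if (0 <= t + k%:Z) then q`_(absz (t + k%:Z)) else 0.

Lemma cf_inv k q k' q' t : q * 'X^k' = q' * 'X^k -> cf k q t = cf k' q' t.
Proof.
move=> E; rewrite /cf.
have [hneg|hpos] := boolP (t + k%:Z + k'%:Z < 0).
  by rewrite !ifF //; apply/negbTE; rewrite -ltNge; lia.
pose j := absz (t + k%:Z + k'%:Z).
have := congr1 (fun r : {poly 'F_p} => r`_j) E; rewrite /= !coefMXn.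
have e1 : (j < k')%N = ~~ (0 <= t + k%:Z) by rewrite /j; lia.
have e2 : (j < k)%N = ~~ (0 <= t + k'%:Z) by rewrite /j; lia.
rewrite e1 e2.
have [h1|h1] := boolP (0 <= t + k%:Z); have [h2|h2] := boolP (0 <= t + k'%:Z) => /=.
- have -> : (j - k')%N = absz (t + k%:Z) by rewrite /j; lia.
  by have -> : (j - k)%N = absz (t + k'%:Z) by rewrite /j; lia.
- by have -> : (j - k')%N = absz (t + k%:Z) by rewrite /j; lia.
- by have -> : (j - k)%N = absz (t + k'%:Z) by rewrite /j; lia.
- by [].
Qed.

Lemma lcoef_lfrac k q t : lcoef ((@lfrac p) k q) t = cf k q t.
Proof.
rewrite /lcoef -/(cf _ _ t); apply: cf_inv; apply: lfrac_eq.
by rewrite -lrep_spec //; apply: lfrac_laurent.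
Qed.

Lemma lcoef_cf (x : K p) t : is_laurent x -> lcoef x t = cf (lrep x).1 (lrep x).2 t.
Proof. by []. Qed.

Lemma lfrac0 k : (@lfrac p) k 0 = 0.
Proof. by rewrite /lfrac rmorph0 mul0r. Qed.

Lemma lfrac1 : (@lfrac p) 0 1 = 1.
Proof. by rewrite /lfrac expr0 rmorph1 divr1. Qed.

Lemma lfracN k q : (@lfrac p) k (- q) = - (@lfrac p) k q.
Proof. by rewrite /lfrac rmorphN mulNr. Qed.

Lemma laurent0 : is_laurent (0 : K p).
Proof. by rewrite -(lfrac0 0); apply: lfrac_laurent. Qed.

Lemma laurent1 : is_laurent (1 : K p).
Proof. by rewrite -lfrac1; apply: lfrac_laurent. Qed.

Lemma laurentN (x : K p) : is_laurent x -> is_laurent (- x).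
Proof. by move=> [k [q ->]]; rewrite -lfracN; apply: lfrac_laurent. Qed.

Lemma lcoef0 t : lcoef (0 : K p) t = 0.
Proof. by rewrite -(lfrac0 0) lcoef_lfrac /cf coef0; case: ifP. Qed.

Lemma lcoef1 t : lcoef (1 : K p) t = (t == 0)%:R.
Proof.
rewrite -lfrac1 lcoef_lfrac /cf coef1 addr0.
have [->|ht] := eqVneq t 0; first by rewrite lexx.
case: ifP => h //; rewrite (_ : (absz t == 0%N) = false) //; apply/negbTE; lia.
Qed.

Lemma lcoefN (x : K p) t : is_laurent x -> lcoef (- x) t = - lcoef x t.
Proof.
move=> [k [q ->]]; rewrite -lfracN !lcoef_lfrac /cf coefN.
by case: ifP; rewrite ?oppr0.
Qed.

Lemma lrep_neq0 (x : K p) : is_laurent x -> x != 0 -> (lrep x).2 != 0.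
Proof.
move=> hx; rewrite [x in x != 0](lrep_spec hx); apply: contra => /eqP->.
by rewrite lfrac0.
Qed.

Lemma degp_nz (x : K p) : is_laurent x -> x != 0 -> lcoef x (degp x) != 0.
Proof.
move=> hx hx0; have hq := lrep_neq0 hx hx0.
rewrite lcoef_cf // /cf /degp.
set k := (lrep x).1; set q := (lrep x).2.
have hs : (0 < size q)%N by rewrite size_poly_gt0.
rewrite ifT; last lia.
have -> : absz ((size q).-1%:Z - k%:Z + k%:Z) = (size q).-1 by lia.
by rewrite -lead_coefE lead_coef_eq0.
Qed.

Lemma degp_gt (x : K p) t : degp x < t -> lcoef x t = 0.
Proof. rewrite /degp.
move=> ht; rewrite /lcoef /=; case: ifP => // h; move: ht; rewrite /= -subn1 => ht.
by rewrite nth_default //; lia.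
Qed.

Lemma degm_nz (x : K p) : is_laurent x -> x != 0 -> lcoef x (degm x) != 0.
Proof.
move=> hx hx0; have hq := lrep_neq0 hx hx0.
rewrite lcoef_cf // /cf /degm.
set k := (lrep x).1; set q := (lrep x).2.
rewrite ifT; last lia.
have -> : absz ((find (fun a => a != 0) q)%:Z - k%:Z + k%:Z) = find (fun a => a != 0) q by lia.
have hhas : has (fun a => a != 0) q.
  rewrite has_find ltnNge; apply/negP => hle.
  have hs : (0 < size q)%N by rewrite size_poly_gt0.
  have := @before_find _ 0 (fun a => a != 0) q (size q).-1.
  rewrite -lead_coefE lead_coef_eq0 hq => /(_ _) /negP; apply; move: hle; rewrite -{1}(prednK hs); exact.
exact: nth_find hhas.
Qed.

Lemma degm_lt (x : K p) t : t < degm x -> lcoef x t = 0.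
Proof.
rewrite /lcoef /degm /=; set f := find _ _ => ht; case: ifP => // h.
have hlt : (absz (t + (lrep x).1%:Z)%R < f)%N by lia.
by move: (before_find 0 hlt) => /negbT; rewrite negbK => /eqP.
Qed.

Lemma deg_uniq (f : int -> 'F_p) t1 t2 :
  f t1 != 0 -> (forall t, t1 < t -> f t = 0) ->
  f t2 != 0 -> (forall t, t2 < t -> f t = 0) -> t1 = t2.
Proof.
move=> h1 h1' h2 h2'; case: (ltrgtP t1 t2) => [hlt|hlt|//].
  by move: h2; rewrite h1' ?eqxx.
by move: h1; rewrite h2' ?eqxx.
Qed.

Lemma degpN (x : K p) : is_laurent x -> degp (- x) = degp x.
Proof.
move=> hx; have [->|hx0] := eqVneq x 0; first by rewrite oppr0.
have hnx := laurentN hx; have hnx0 : - x != 0 by rewrite oppr_eq0.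
apply: (@deg_uniq (lcoef x)).
- by have := degp_nz hnx hnx0; rewrite lcoefN // oppr_eq0.
- by move=> t ht; have := degp_gt ht; rewrite lcoefN // => /eqP; rewrite oppr_eq0 => /eqP.
- exact: degp_nz.
- by move=> t ht; apply: degp_gt.
Qed.

Lemma degmN (x : K p) : is_laurent x -> degm (- x) = degm x.
Proof.
move=> hx; have [->|hx0] := eqVneq x 0; first by rewrite oppr0.
have hnx := laurentN hx; have hnx0 : - x != 0 by rewrite oppr_eq0.
have := @deg_uniq (fun t => lcoef x (- t)) (- degm (- x)) (- degm x).
rewrite !opprK => H; apply: oppr_inj; apply: H.
- by have := degm_nz hnx hnx0; rewrite lcoefN // oppr_eq0.
- move=> t ht; apply/eqP; rewrite -oppr_eq0 -lcoefN //; apply/eqP.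
  apply: degm_lt; lia.
- exact: degm_nz.
- by move=> t ht; apply: degm_lt; lia.
Qed.

Lemma lcoef_bound (x : K p) t : lcoef x t != 0 ->
  - ((maxn (lrep x).1 (size (lrep x).2))%:Z) <= t <= (maxn (lrep x).1 (size (lrep x).2))%:Z.
Proof.
rewrite /lcoef; case: ifP => h; last by rewrite eqxx.
have [hs|hs] := leqP (size (lrep x).2) (absz (t + (lrep x).1%:Z)).
  by rewrite nth_default // eqxx.
move=> _; lia.
Qed.

End Glue.


Section Dist.
Local Notation RR := Rdefinitions.R.

Lemma pow2_pos (k : nat) : (0 : RR) < 2%:R ^+ k.
Proof. by rewrite exprn_gt0 // ltr0n. Qed.

Lemma pow2V_le (k m : nat) : (k <= m)%N -> (2%:R : RR) ^- m <= 2%:R ^- k.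
Proof.
move=> hkm; rewrite lef_pV2 ?posrE ?pow2_pos //.
by rewrite ler_eXn2l // ltr1n.
Qed.

Lemma archi_pow2 (eps : RR) : 0 < eps -> exists m : nat, (2%:R : RR) ^- m < eps.
Proof.
move=> he; have h0 : 0 <= eps^-1 by rewrite invr_ge0 ltW.
exists (Num.Def.archi_bound eps^-1).
have := @upper_nthrootP _ eps^-1 (Num.Def.archi_bound eps^-1) (leqnn _).
by rewrite invf_plt ?posrE ?pow2_pos.
Qed.

Lemma cdist_ge p n (a b : config p n) (m : nat) :
  (exists j : int, (absz j <= m)%N /\ a j <> b j) -> (2%:R : RR) ^- m <= cdist a b.
Proof.
move=> [j [hj hab]]; rewrite /cdist; case: pselect => [h|h]; last first.
  by exfalso; apply: h; exists (absz j); apply/asboolP; exists j.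
case: ex_minnP => k hk hmin; apply: pow2V_le; apply: leq_trans hj.
by apply: hmin; apply/asboolP; exists j.
Qed.

Lemma cdist_le p n (a b : config p n) (m : nat) :
  (forall j : int, (absz j <= m)%N -> a j = b j) -> cdist a b <= (2%:R : RR) ^- m.+1.
Proof.
move=> hab; rewrite /cdist; case: pselect => [h|h]; last first.
  by rewrite invr_ge0 ltW ?pow2_pos.
case: ex_minnP => k hk hmin; apply: pow2V_le.
move/asboolP: hk => [j [hj hne]]; rewrite -hj ltnNge; apply/negP => hle.
by apply: hne; apply: hab.
Qed.

End Dist.


Lemma sum1 (V : nmodType) m (i0 : 'I_m) (G : 'I_m -> V) :
  (forall i, i != i0 -> G i = 0) -> \sum_(i < m) G i = G i0.
Proof. by move=> H; rewrite (bigD1 i0) //= big1 ?addr0. Qed.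

Section PolyGlue.
Variables (R : comNzRingType) (N : nat) (alpha : 'I_N -> R).

Definition Sa : {poly R} := \sum_(i < N) (alpha i)%:P * 'X^i.
Definition Pa : {poly R} := 'X^N - Sa.

Lemma size_Sa : (size Sa <= N)%N.
Proof.
rewrite /Sa; apply: leq_trans (size_sum _ _ _) _.
apply/bigmax_leqP => i _; rewrite mul_polyC.
apply: leq_trans (size_scale_leq _ _) _; rewrite size_polyXn; exact: ltn_ord.
Qed.

Lemma coefSa_ord (i : 'I_N) : Sa`_i = alpha i.
Proof.
rewrite /Sa coef_sum (@sum1 _ _ i) ?coefCM ?coefXn ?eqxx ?mulr1 //.
move=> j hj; rewrite coefCM coefXn; case: eqP => [h|]; last by rewrite mulr0.
by move: hj; rewrite -val_eqE /= h eqxx.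
Qed.

Lemma coefSa_ge j : (N <= j)%N -> Sa`_j = 0.
Proof. move=> h; apply: nth_default; exact: leq_trans size_Sa h. Qed.

Lemma size_Pa : size Pa = N.+1.
Proof.
rewrite /Pa size_polyDl ?size_polyXn // size_polyN ltnS; exact: size_Sa.
Qed.

Lemma monic_Pa : Pa \is monic.
Proof.
rewrite monicE /Pa lead_coefDl ?lead_coefXn // size_polyN size_polyXn ltnS; exact: size_Sa.
Qed.

Definition Qa : {poly R} := Sa + 'X^N.

Lemma size_Qa : size Qa = N.+1.
Proof. by rewrite /Qa addrC size_polyDl ?size_polyXn // ltnS; exact: size_Sa. Qed.

Lemma monic_Qa : Qa \is monic.
Proof.
by rewrite monicE /Qa addrC lead_coefDl ?lead_coefXn // size_polyXn ltnS size_Sa.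
Qed.

Lemma coef_PQ j : Pa`_j = Qa`_j \/ Pa`_j = - Qa`_j.
Proof.
rewrite /Pa /Qa coefB coefD coefXn.
have [hj|hj] := eqVneq j N.
  by left; rewrite hj coefSa_ge // subr0 add0r.
by right; rewrite sub0r addr0.
Qed.

Lemma coefPa_ord (i : 'I_N) : Pa`_i = - alpha i.
Proof. by rewrite /Pa coefB coefXn coefSa_ord (ltn_eqF (ltn_ord i)) sub0r. Qed.

Lemma coefPa_N : Pa`_N = 1.
Proof. by rewrite /Pa coefB coefXn eqxx coefSa_ge // subr0. Qed.

End PolyGlue.

Lemma char_poly_tr (R : comNzRingType) m (A : 'M[R]_m) : char_poly A^T = char_poly A.
Proof.
rewrite /char_poly -det_tr; congr (\det _); apply/matrixP => i j.
by rewrite /char_poly_mx !mxE eq_sym.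
Qed.

Lemma char_poly_cast (R : comNzRingType) m1 m2 (e : m1 = m2) (A : 'M[R]_m1) :
  char_poly (castmx (e, e) A) = char_poly A.
Proof. by case: m2 / e; rewrite castmx_id. Qed.

Lemma char_poly_matA p N (alpha : 'I_N -> K p) : char_poly (matA alpha) = Pa alpha.
Proof.
have e : (size (Pa alpha)).-1 = N by rewrite size_Pa.
rewrite -[RHS](companionmxK (monic_Pa alpha)) -(char_poly_cast e).
congr char_poly; apply/matrixP => i j.
rewrite castmxE /matA /companionmx !mxE.
rewrite (_ : nat_of_ord (cast_ord (esym (e,e).1) i) = i) //.
rewrite (_ : nat_of_ord (cast_ord (esym (e,e).2) j) = j) //.
rewrite size_Pa (_ : (N.+1).-2 = N.-1) // (coefPa_ord alpha j) opprK.
have hi := ltn_ord i.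
case h: (i.+1 < N)%N.
  have -> : (i == N.-1 :> nat) = false by apply/negbTE; lia.
  by rewrite eq_sym.
have -> : (i == N.-1 :> nat) = true by apply/eqP; lia.
reflexivity.
Qed.


Section LcaGlue.
Variables (p N : nat).

Lemma conv_ext_a (F : fieldType) R (a a' : int -> F) u i :
  (forall t, a t = a' t) -> conv R a u i = conv R a' u i.
Proof. by move=> H; apply: eq_bigr => k _; rewrite H. Qed.

Lemma conv_zero_a (F : fieldType) R (u : int -> F) i : conv R (fun _ => 0) u i = 0.
Proof. by apply: big1 => k _; rewrite mul0r. Qed.

Lemma lca_row (M : 'M[K p]_N) (c : config p N) y a :
  lca M c y a 0 = \sum_(b < N) conv (radius M) (lcoef (M a b)) (fun z => c z b 0) y.
Proof.
rewrite /lca summxE.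
under eq_bigr => k _ do rewrite mxE.
rewrite exchange_big; apply: eq_bigr => b _; apply: eq_bigr => k _.
by rewrite mxE.
Qed.

End LcaGlue.

Section MatA.
Variables (p n : nat) (alpha : 'I_n.+1 -> K p).
Hypothesis halpha : forall i, is_laurent (alpha i).
Local Notation N := n.+1.
Local Notation M := (matA alpha).
Local Notation Fm := (lca (matA alpha)).
Local Notation r := (radius (matA alpha)).

Lemma lca_shift (c : config p N) y (a : nat) : (a < n)%N ->
  Fm c y (inord a) 0 = c y (inord a.+1) 0.
Proof.
move=> ha; rewrite lca_row (@sum1 _ _ (inord a.+1)).
  rewrite (@conv_ext_a _ _ _ (fun t => (t == 0)%:R)) ?conv_delta // => t.
  rewrite mxE !inordK; try lia.
  rewrite ifT; last lia.
  by rewrite eqxx lcoef1.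
move=> b hb; rewrite (@conv_ext_a _ _ _ (fun _ => 0)) ?conv_zero_a // => t.
rewrite mxE inordK; last lia.
rewrite ifT; last lia.
have -> : (b == a.+1 :> nat) = false.
  apply/negbTE; apply: contra hb => /eqP hb.
  by apply/eqP; apply: val_inj; rewrite /= inordK // hb.
exact: lcoef0.
Qed.

Lemma lca_last (c : config p N) y :
  Fm c y ord_max 0 = \sum_(b < N) conv r (lcoef (alpha b)) (fun z => c z b 0) y.
Proof.
rewrite lca_row; apply: eq_bigr => b _; apply: conv_ext_a => t.
by rewrite mxE /= ltnn.
Qed.

Definition itc (l : nat) (c : config p N) := iter l Fm c.

Lemma iter_row (c : config p N) y (b : nat) : (b < N)%N -> forall l,
  itc l c y (inord b) 0 = itc (l + b) c y (inord 0) 0.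
Proof.
elim: b => [|b IH] hb l; first by rewrite addn0.
rewrite -(lca_shift _ _ (_ : (b < n)%N)); last lia.
have -> : (l + b.+1 = l.+1 + b)%N by rewrite addnS.
by rewrite -IH; last lia.
Qed.

Definition betaP (i : nat) (t : int) : 'F_p := lcoef (Pa alpha)`_i t.

Lemma recur_sum (u : nat -> int -> 'F_p) l y :
  \sum_(i < N.+1) conv r (betaP i) (u (l + i)%N) y =
  u (l + N)%N y - \sum_(b < N) conv r (lcoef (alpha b)) (u (l + b)%N) y.
Proof.
rewrite big_ord_recr /= addrC; congr (_ + _).
  rewrite (@conv_ext_a _ _ _ (fun t => (t == 0)%:R)) ?conv_delta // => t.
  by rewrite /betaP coefPa_N lcoef1.
rewrite -sumrN; apply: eq_bigr => b _.
rewrite -conv_oppl; apply: conv_ext_a => t.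
by rewrite /betaP (coefPa_ord alpha b) lcoefN.
Qed.

Lemma recur_equiv (u : nat -> int -> 'F_p) :
  recur N r betaP u <->
  (forall l y, u (l + N)%N y = \sum_(b < N) conv r (lcoef (alpha b)) (u (l + b)%N) y).
Proof.
split=> H l y.
  by apply/eqP; rewrite -subr_eq0 -recur_sum H.
by rewrite recur_sum H subrr.
Qed.

Definition useqc (c : config p N) (j : nat) (y : int) : 'F_p := itc j c y (inord 0) 0.

Lemma useqc_recur (c : config p N) : recur N r betaP (useqc c).
Proof.
apply/recur_equiv => l y.
rewrite /useqc (_ : (l + N = l.+1 + n)%N); last lia.
rewrite -iter_row // (_ : inord n = ord_max); last by apply: val_inj; rewrite /= inordK.
rewrite [itc l.+1 c]/itc iterS lca_last; apply: eq_bigr => b _.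
apply: conv_ext => z; rewrite -iter_row //.
by rewrite inord_val.
Qed.

Definition cfg (w : nat -> int -> 'F_p) : config p N := fun y => \col_(b < N) w b y.

Lemma cfg_orbit (w : nat -> int -> 'F_p) : recur N r betaP w ->
  forall l y (b : 'I_N), itc l (cfg w) y b 0 = w (l + b)%N y.
Proof.
move/recur_equiv=> hw; elim=> [|l IH] y b; first by rewrite /itc /= /cfg mxE.
rewrite /itc iterS -/(itc l _).
have [hb|hb] := ltnP b n.
  have -> : b = inord b by rewrite inord_val.
  rewrite lca_shift // IH inordK ?inordK; try lia.
  by rewrite addnS.
have -> : b = ord_max by apply: val_inj => /=; have := ltn_ord b; lia.
rewrite lca_last /= (_ : (l.+1 + n = l + N)%N); last lia.
rewrite hw; apply: eq_bigr => b' _; apply: conv_ext => z.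
by rewrite IH.
Qed.

End MatA.


Lemma radius_bound p N (M : 'M[K p]_N) a b :
  (maxn (lrep (M a b)).1 (size (lrep (M a b)).2) <= radius M)%N.
Proof.
rewrite /radius.
apply: leq_trans (@leq_bigmax _ _ a).
move: (@leq_bigmax _ (fun b0 => maxn (lrep (M a b0)).1 (size (lrep (M a b0)).2)) b).
by [].
Qed.

Section Main.
Variables (p n : nat) (alpha : 'I_n.+1 -> K p).
Hypothesis halpha : forall i, is_laurent (alpha i).
Local Notation N := n.+1.
Local Notation Fm := (lca (matA alpha)).
Local Notation r := (radius (matA alpha)).
Local Notation P := (Pa alpha).
Local Notation beta := (betaP alpha).

Lemma laurentP j : is_laurent P`_j.
Proof.
have [hj|hj] := ltnP j N.
  by rewrite -[j]/(nat_of_ord (Ordinal hj)) coefPa_ord; apply: laurentN.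
have [->|hjN] := eqVneq j N; first by rewrite coefPa_N; apply: laurent1.
by rewrite nth_default ?size_Pa; [apply: laurent0 | lia].
Qed.

Lemma beta_supp i t : (i <= N)%N -> beta i t != 0 -> - (r%:Z) <= t <= r%:Z.
Proof.
move=> hi; rewrite /betaP.
have [hiN|hiN] := ltnP i N.
  rewrite -[i]/(nat_of_ord (Ordinal hiN)) coefPa_ord lcoefN // oppr_eq0.
  move/lcoef_bound; have := radius_bound (matA alpha) ord_max (Ordinal hiN).
  rewrite mxE /= ltnn; lia.
have -> : i = N by lia.
rewrite coefPa_N lcoef1; have [->|ht] := eqVneq t 0; first by move=> _; lia.
by rewrite mulr0n eqxx.
Qed.

Lemma beta0 i t : P`_i = 0 -> beta i t = 0.
Proof. by rewrite /betaP => ->; rewrite lcoef0. Qed.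

Lemma recur_zero : recur N r beta (fun _ _ => 0).
Proof. by move=> l y; rewrite big1 // => i _; rewrite conv0. Qed.

Lemma not_pos :
  (forall m : nat, exists w, [/\ recur N r beta w, (exists y0, w 0%N y0 != 0) &
       forall l y, (absz y <= m)%N -> w l y = 0]) ->
  ~ pos_expansive Fm.
Proof.
move=> H [eps [heps Hexp]].
have [m hm] := archi_pow2 heps.
have [w [hw [y0 hy0] hwin]] := H m.
have hne : cfg n w <> cfg n (fun _ _ => 0).
  move/(congr1 (fun c : config p N => c y0 (inord 0) 0)); rewrite /cfg !mxE.
  by rewrite inordK // => /eqP; rewrite (negbTE hy0).
have [l hl] := Hexp _ _ hne.
have : cdist (iter l Fm (cfg n w)) (iter l Fm (cfg n (fun _ _ => 0))) <= 2%:R ^- m.+1.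
  apply: cdist_le => j hj; apply/matrixP => b k; rewrite (ord1 k).
  rewrite -/(itc alpha l (cfg n w)) -/(itc alpha l (cfg n (fun _ _ => 0))).
  by rewrite (cfg_orbit halpha hw) (cfg_orbit halpha recur_zero) hwin.
move=> hle; have := le_trans hl (le_trans hle (pow2V_le (leqnSn m))).
by rewrite leNgt hm.
Qed.

Lemma no_fminus : pos_expansive Fm ->
  ~ (exists i t0, [/\ (1 <= i <= N)%N, beta i t0 != 0 & forall t, t < t0 -> beta 0%N t = 0]).
Proof.
move=> hpos hF; apply: (not_pos _ hpos) => m.
have [u [u00 uneg urec]] := construct_exists beta_supp hF.
exists (fun l y => u l (y - (m.+1)%:Z)); split.
- move=> l y; rewrite -[RHS](urec l (y - (m.+1)%:Z)).
  by apply: eq_bigr => i _; rewrite conv_shift.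
- by exists (m.+1)%:Z; rewrite subrr u00 oner_neq0.
- by move=> l y hy; apply: uneg; lia.
Qed.

Lemma no_fplus : pos_expansive Fm ->
  ~ (exists i t0, [/\ (1 <= i <= N)%N, beta i t0 != 0 & forall t, t0 < t -> beta 0%N t = 0]).
Proof.
move=> hpos [i [t0 [hi hb hz]]]; apply: (not_pos _ hpos) => m.
pose beta' := fun i t => beta i (- t).
have hs' : forall i t, (i <= N)%N -> beta' i t != 0 -> - (r%:Z) <= t <= r%:Z.
  by move=> j t hj /(beta_supp hj); lia.
have hF' : exists i t0, [/\ (1 <= i <= N)%N, beta' i t0 != 0 & forall t, t < t0 -> beta' 0%N t = 0].
  exists i, (- t0); split => //; first by rewrite /beta' opprK.
  by move=> t ht; rewrite /beta' hz //; lia.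
have [u [u00 uneg urec]] := construct_exists hs' hF'.
exists (fun l y => u l (- y - (m.+1)%:Z)); split.
- move=> l y; rewrite -[RHS](urec l (- y - (m.+1)%:Z)).
  apply: eq_bigr => j _; rewrite -conv_shift -conv_refl.
  by apply: conv_ext_a => t; rewrite /beta' opprK.
- by exists (- (m.+1)%:Z); rewrite opprK subrr u00 oner_neq0.
- by move=> l y hy; apply: uneg; lia.
Qed.

Lemma betaN t : beta N t = (t == 0)%:R.
Proof. by rewrite /betaP coefPa_N lcoef1. Qed.

Lemma betaN0 : beta N 0 != 0.
Proof. by rewrite betaN eqxx oner_neq0. Qed.

Lemma pos_to_exp : pos_expansive Fm -> expansive_poly P.
Proof.
move=> hpos.
have h0 : P`_0 != 0.
  apply/eqP => h0; apply: (no_fminus hpos); exists N, 0; split; first lia.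
    exact: betaN0.
  by move=> t _; apply: beta0.
have hsz : (size P).-1 = N by rewrite size_Pa.
split.
- exact: monic_Pa.
- exact: laurentP.
- exact: h0.
- split.
    rewrite ltNge; apply/negP => hle; apply: (no_fplus hpos); exists N, 0; split; first lia.
      exact: betaN0.
    move=> t ht; rewrite /betaP; apply: degp_gt; exact: le_lt_trans hle ht.
  move=> i; rewrite hsz => hi; have [->|hPi] := eqVneq P`_i 0; first by left.
  right; rewrite ltNge; apply/negP => hle; apply: (no_fplus hpos).
  exists i, (degp P`_i); split; first by lia.
    exact: degp_nz (laurentP i) hPi.
  move=> t ht; rewrite /betaP; apply: degp_gt; exact: le_lt_trans hle ht.
- split.
    rewrite ltNge; apply/negP => hle; apply: (no_fminus hpos); exists N, 0; split; first lia.
      exact: betaN0.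
    move=> t ht; rewrite /betaP; apply: degm_lt; exact: lt_le_trans ht hle.
  move=> i; rewrite hsz => hi; have [->|hPi] := eqVneq P`_i 0; first by left.
  right; rewrite ltNge; apply/negP => hle; apply: (no_fminus hpos).
  exists i, (degm P`_i); split; first by lia.
    exact: degm_nz (laurentP i) hPi.
  move=> t ht; rewrite /betaP; apply: degm_lt; exact: lt_le_trans ht hle.
Qed.

Lemma exp_to_pos : expansive_poly P -> pos_expansive Fm.
Proof.
move=> [_ _ h0 [hd hpd] [he hpe]].
have hsz : (size P).-1 = N by rewrite size_Pa.
have hmid : forall i t, (1 <= i <= N)%N -> beta i t != 0 ->
    degm P`_0 < t /\ t < degp P`_0.
  move=> i t hi hb.
  have [hiN|hiN] := eqVneq i N.
    move: hb; rewrite hiN betaN; have [->|] := eqVneq t 0; first by move=> _; split.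
    by rewrite mulr0n eqxx.
  have hi' : (1 <= i < (size P).-1)%N by rewrite hsz; lia.
  have [hPi|hPi] := eqVneq P`_i 0; first by move: hb; rewrite beta0 ?eqxx.
  case: (hpd i hi') => [/eqP|hdi]; first by rewrite (negbTE hPi).
  case: (hpe i hi') => [/eqP|hei]; first by rewrite (negbTE hPi).
  split.
    apply: lt_le_trans hei _; rewrite leNgt; apply/negP => hlt.
    by move: hb; rewrite /betaP degm_lt // eqxx.
  apply: le_lt_trans hdi; rewrite leNgt; apply/negP => hlt.
  by move: hb; rewrite /betaP degp_gt // eqxx.
have h0e : beta 0 (degm P`_0) != 0 by exact: degm_nz (laurentP 0) h0.
have h0d : beta 0 (degp P`_0) != 0 by exact: degp_nz (laurentP 0) h0.
have hb0 : forall t, beta 0 t != 0 -> degm P`_0 <= t <= degp P`_0.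
  move=> t hb; apply/andP; split; rewrite leNgt; apply/negP => hlt; move: hb.
    by rewrite /betaP degm_lt // eqxx.
  by rewrite /betaP degp_gt // eqxx.
exists (2%:R ^- r); split; first by rewrite invr_gt0 pow2_pos.
move=> c c' hne; case: (pselect (exists l, 2%:R ^- r <= cdist (iter l Fm c) (iter l Fm c'))) => // hno.
exfalso; apply: hne.
have hagree : forall l j, (absz j <= r)%N -> itc alpha l c j = itc alpha l c' j.
  move=> l j hj; case: (eqVneq (itc alpha l c j) (itc alpha l c' j)) => // hneq.
  exfalso; apply: hno; exists l; apply: cdist_ge; exists j; split => //.
  exact/eqP.
pose u := fun j y => useqc alpha c j y - useqc alpha c' j y.
have hu : recur N r beta u := recur_sub (useqc_recur halpha c) (useqc_recur halpha c').
have hwin : forall l y, - (r%:Z) <= y <= r%:Z -> u l y = 0.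
  by move=> l y hy; rewrite /u /useqc hagree ?subrr //; lia.
have hsupp0 := beta_supp (leq0n N) h0e.
have hsupp0' := beta_supp (leq0n N) h0d.
have hR := @right_zero _ N r r beta (degm P`_0) u (leqnn r) _ _ h0e _ hu hwin.
have hL := @left_zero _ N r r beta (degp P`_0) u (leqnn r) _ _ h0d _ hu hwin.
have hall : forall l y, u l y = 0.
  move=> l y; have [hy|hy] := lerP (- (r%:Z)) y.
    apply: hR => //; try lia.
    move=> [|i] t hi hb.
      have := hb0 t hb => /andP [h1 _]; move: h1.
      by rewrite le_eqVlt => /orP [/eqP ->|->]; rewrite ?eqxx ?orbT.
    have hi' : (1 <= i.+1 <= N)%N by lia.
    by have [] := hmid i.+1 t hi' hb.
  apply: hL => //; try lia.
  move=> [|i] t hi hb.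
    have := hb0 t hb => /andP [_ h2]; move: h2.
    by rewrite le_eqVlt => /orP [/eqP ->|->]; rewrite ?eqxx ?orbT.
  have hi' : (1 <= i.+1 <= N)%N by lia.
  by have [] := hmid i.+1 t hi' hb.
apply: funext => y; apply/matrixP => b k; rewrite (ord1 k).
have e1 := iter_row alpha c y (ltn_ord b) 0.
have e2 := iter_row alpha c' y (ltn_ord b) 0.
rewrite add0n inord_val in e1 e2.
change (itc alpha 0 c y b 0 = itc alpha 0 c' y b 0); rewrite e1 e2.
by have := hall b y; rewrite /u /useqc => /eqP; rewrite subr_eq0 => /eqP.
Qed.

End Main.

Lemma exp_sign p (P Q : {poly K p}) : Q \is monic -> size P = size Q ->
  (forall j, Q`_j = P`_j \/ Q`_j = - P`_j) -> expansive_poly P -> expansive_poly Q.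
Proof.
move=> hQ hs hc [hP hl h0 [hd hpd] [he hpe]].
have hl' : forall j, is_laurent Q`_j.
  by move=> j; case: (hc j) => ->; [apply: hl | apply: laurentN].
have hdp : forall j, degp Q`_j = degp P`_j.
  by move=> j; case: (hc j) => ->; [| rewrite degpN].
have hdm : forall j, degm Q`_j = degm P`_j.
  by move=> j; case: (hc j) => ->; [| rewrite degmN].
have hz : forall j, P`_j = 0 -> Q`_j = 0.
  by move=> j h; case: (hc j) => ->; rewrite h ?oppr0.
split.
- exact: hQ.
- exact: hl'.
- by case: (hc 0%N) => ->; [exact: h0 | rewrite oppr_eq0].
- split; first by rewrite hdp.
  move=> i; rewrite -hs => hi; case: (hpd i hi) => [h|h]; first by left; apply: hz.
  by right; rewrite !hdp.
- split; first by rewrite hdm.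
  move=> i; rewrite -hs => hi; case: (hpe i hi) => [h|h]; first by left; apply: hz.
  by right; rewrite !hdm.
Qed.


Theorem lemma10 (p n : nat) (hp : prime p) (hn : (1 < n)%N)
    (alpha : 'I_n -> K p) (halpha : forall i, is_laurent (alpha i)) :
  [<-> pos_expansive (lca (matA alpha));
       expansive_mx (matA alpha);
       expansive_mx (matA alpha)^T;
       expansive_poly (\sum_(i < n) (alpha i)%:P * 'X^i + 'X^n)].
Proof.
case: n hn alpha halpha => [|n] hn alpha halpha; first by exfalso; move: hn.
have e1 : pos_expansive (lca (matA alpha)) <-> expansive_poly (Pa alpha).
  split; [exact: pos_to_exp | exact: exp_to_pos].
have e2 : expansive_mx (matA alpha) <-> expansive_poly (Pa alpha).
  by rewrite /expansive_mx char_poly_matA.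
have e3 : expansive_mx (matA alpha)^T <-> expansive_poly (Pa alpha).
  by rewrite /expansive_mx char_poly_tr char_poly_matA.
have e4 : expansive_poly (\sum_(i < n.+1) (alpha i)%:P * 'X^i + 'X^(n.+1)) <-> expansive_poly (Pa alpha).
  split; apply: exp_sign.
  - exact: monic_Pa.
  - by rewrite size_Pa size_Qa.
  - by move=> j; case: (coef_PQ alpha j) => ->; [left | right].
  - exact: monic_Qa.
  - by rewrite size_Pa size_Qa.
  - move=> j; case: (coef_PQ alpha j) => ->; [by left | by right; rewrite opprK].
tfae.
- by move=> h; apply/e2/e1.
- by move=> h; apply/e3/e2.
- by move=> h; apply/e4/e3.
- by move=> h; apply/e1/e4.
Qed.
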